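(* The metric space $(\mathcal M_{\mathcal G,\Gamma},\mathrm m_{\mathcal G,\Gamma})$ is separable.
   Context: $(X,\Sigma,\mu)$ is a separable Lebesgue space with a non-atomic probability measure $\mu$. $\mathcal A$ is the group of invertible measure-preserving transformations of $X$, two transformations being identified if they agree outside a null set. Fix a countable family $\{A_i\}_{i\in\mathbb N}\subset\Sigma$ that generates $\Sigma$ and is dense in $\Sigma$ (for every $A\in\Sigma$ and $\varepsilon>0$ there is $i$ with $\mu(A_i\triangle A)<\varepsilon$). For $T,S\in\mathcal A$ put $\mathrm d(T,S)=\sum_{i}2^{-i}\big(\mu(TA_i\triangle SA_i)+\mu(T^{-1}A_i\triangle S^{-1}A_i)\big)$ and $\mathrm a(T,S)=\sum_{i,j}2^{-(i+j)}|\mu(TA_i\cap A_j)-\mu(SA_i\cap A_j)|$. $\mathcal G$ is a Hausdorff locally compact group with a countable neighborhood base, with identity $e$. Fix an at most countable family $\{K_i\}$ of compact subsets of $\mathcal G$ with nonempty interiors whose union contains a set generating $\mathcal G$. An action of $\mathcal G$ is a family $T=\{T^g\}_{g\in\mathcal G}\subset\mathcal A$ with $T^gT^h=T^{gh}$ for all $g,h\in\mathcal G$ and such that $g\mapsto\mu(T^gA\cap B)$ is continuous on $\mathcal G$ for all $A,B\in\Sigma$. $\mathcal A_{\mathcal G}$ is the set of all actions, and $\mathrm d_{\mathcal G}(T,S)=\sum_i 2^{-i}\sup_{g\in K_i}\mathrm d(T^g,S^g)$. Let $\Gamma\subset\mathcal G$ be an unbounded subset (not contained in any compact set). An action $T$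 is $\Gamma$-mixing if for all $A,B\in\Sigma$ and $\varepsilon>0$ there is a compact $C\subset\mathcal G$ with $|\mu(T^gA\cap B)-\mu(A)\mu(B)|<\varepsilon$ for all $g\in\Gamma\setminus C$. $\mathcal M_{\mathcal G,\Gamma}$ is the set of all $\Gamma$-mixing actions of $\mathcal G$, equipped with the (leash) metric $\mathrm m_{\mathcal G,\Gamma}(T,S)=\mathrm d_{\mathcal G}(T,S)+\sup_{g\in\Gamma}\mathrm a(T^g,S^g)$. *)

(* Defs.v *)
From HB Require Import structures.
From mathcomp Require Import all_boot all_order all_algebra.
From mathcomp Require Import all_classical all_reals all_analysis.
Import Order.TTheory GRing.Theory Num.Theory.
Import numFieldNormedType.Exports.

Set Implicit Arguments.
Unset Strict Implicit.
Unset Printing Implicit Defensive.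

Local Open Scope classical_set_scope.
Local Open Scope ring_scope.

Section MeasureSide.
Context {d : measure_display} {X : measurableType d} {R : realType}.
Variable mu : {measure set X -> \bar R}.

Definition symdiff (A B : set X) : set X := (A `\` B) `|` (B `\` A).

(* (X, Sigma, mu) is a (separable) Lebesgue space with non-atomic
   probability measure: it is isomorphic mod 0 to [0,1] with Lebesgue
   measure.  phi : X -> R pushes mu to Lebesgue measure on [0,1] and has a
   measurable inverse psi mod 0. *)
Definition nonatomic_lebesgue_space : Prop :=
  exists (phi : X -> R) (psi : R -> X),
    [/\ measurable_fun setT phi, measurable_fun setT psi,
        {ae mu, forall x, psi (phi x) = x} &
        forall B : set R, measurable B ->
          mu (phi @^-1` B) = lebesgue_measure (B `&` `[0%R, 1%R]) ].

Definition measure_preserving (T : X -> X) : Prop :=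
  measurable_fun setT T /\ forall B, measurable B -> mu (T @^-1` B) = mu B.

Record inv_map := InvMap { fwd : X -> X ; bwd : X -> X }.

(* t represents an invertible measure-preserving transformation of X
   (mod null sets): fwd t is the transformation, bwd t its inverse mod 0. *)
Definition in_Aut (t : inv_map) : Prop :=
  [/\ measure_preserving (fwd t), measure_preserving (bwd t),
      {ae mu, forall x, bwd t (fwd t x) = x} &
      {ae mu, forall x, fwd t (bwd t x) = x} ].

(* image T A (= preimage of A under T^{-1}) and preimage T^{-1} A *)
Definition img (t : inv_map) (A : set X) : set X := bwd t @^-1` A.
Definition preimg (t : inv_map) (A : set X) : set X := fwd t @^-1` A.

Variable A : nat -> set X.

Definition dist_d (t s : inv_map) : \bar R :=
  \esum_(i in [set: nat])
    ((((2%:R)^-1) ^+ i)%:E *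
      (mu (symdiff (img t (A i)) (img s (A i))) +
       mu (symdiff (preimg t (A i)) (preimg s (A i)))))%E.

Definition dist_a (t s : inv_map) : \bar R :=
  \esum_(ij in [set: nat * nat])
    ((((2%:R)^-1) ^+ (ij.1 + ij.2))%:E *
      `| mu (img t (A ij.1) `&` A ij.2) - mu (img s (A ij.1) `&` A ij.2) |)%E.

End MeasureSide.
Arguments inv_map {d} X.

Section GroupSide.
Context {G : topologicalType}.
Variables (mul : G -> G -> G) (inv : G -> G) (e : G).

Definition lc_group : Prop :=
  [/\ (forall x y z, mul x (mul y z) = mul (mul x y) z),
      (forall x, mul e x = x /\ mul x e = x) &
      (forall x, mul (inv x) x = e /\ mul x (inv x) = e) ] /\
  [/\ continuous (fun p : G * G => mul p.1 p.2),
      continuous inv,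
      hausdorff_space G,
      locally_compact [set: G] &
      exists U : nat -> set G,
        (forall n, nbhs e (U n)) /\
        (forall V, nbhs e V -> exists n, U n `<=` V) ].

Definition generates (S : set G) : Prop :=
  forall H : set G, H e -> (forall x y, H x -> H y -> H (mul x (inv y))) ->
    S `<=` H -> H = setT.

Context {d : measure_display} {X : measurableType d} {R : realType}.
Variable mu : {measure set X -> \bar R}.

Definition is_action (T : G -> inv_map X) : Prop :=
  [/\ (forall g, in_Aut mu (T g)),
      (forall g h, {ae mu, forall x,
           fwd (T g) (fwd (T h) x) = fwd (T (mul g h)) x}) &
      (forall A B : set X, measurable A -> measurable B ->
         continuous (fun g => fine (mu (img (T g) A `&` B)))) ].

Variable Gam : set G.

Definition is_mixing (T : G -> inv_map X) : Prop :=
  is_action T /\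
  forall A B : set X, measurable A -> measurable B ->
  forall eps : R, 0 < eps ->
  exists C : set G, compact C /\
    forall g, Gam g -> ~ C g ->
      `| fine (mu (img (T g) A `&` B)) - fine (mu A) * fine (mu B) | < eps.

Variables (Aset : nat -> set X) (I : set nat) (K : nat -> set G).

Definition dist_dG (T S : G -> inv_map X) : \bar R :=
  \esum_(i in I) ((((2%:R)^-1) ^+ i)%:E *
     ereal_sup [set dist_d mu Aset (T g) (S g) | g in K i])%E.

Definition dist_m (T S : G -> inv_map X) : \bar R :=
  (dist_dG T S + ereal_sup [set dist_a mu Aset (T g) (S g) | g in Gam])%E.

End GroupSide.

(* Submission.v *)
Require Import Defs.
From HB Require Import structures.
From mathcomp Require Import all_boot all_order all_algebra.
From mathcomp Require Import all_classical all_reals all_analysis.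
From mathcomp Require Import ring lra finmap zify.
Import Order.TTheory GRing.Theory Num.Theory.
Import numFieldNormedType.Exports.
Local Open Scope classical_set_scope.
Local Open Scope ring_scope.

Module Geo.

Section Geo.
Variable R : realType.
Definition w (i : nat) : R := ((2%:R)^-1) ^+ i.

Lemma w_ge0 i : 0 <= w i.
Proof. by rewrite /w exprn_ge0 // invr_ge0. Qed.

Lemma wS i : w i.+1 = w i / 2.
Proof. by rewrite /w exprSr. Qed.

Lemma sum_w M : \sum_(0 <= i < M) w i = 2 - 2 * w M.
Proof.
elim: M => [|M IH]; first by rewrite big_geq // /w expr0; lra.
rewrite big_nat_recr //= IH wS; lra.
Qed.

Lemma sum_w_tail N M :
  \sum_(0 <= i < M) (if (N <= i)%N then w i else 0) <= 2 * w N.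
Proof.
have H0 : forall M, (M <= N)%N -> \sum_(0 <= i < M) (if (N <= i)%N then w i else 0) = 0.
  move=> M' HM; rewrite big_nat big1 // => i /andP[_ Hi].
  by rewrite ifF //; apply/negbTE; rewrite -ltnNge (leq_trans Hi).
case: (leqP M N) => HMN; first by rewrite H0 // mulr_ge0 // w_ge0.
have -> : M = (N + (M - N))%N by rewrite subnKC // ltnW.
elim: (M - N)%N => [|k IH]; first by rewrite addn0 H0 // mulr_ge0 // w_ge0.
rewrite addnS big_nat_recr //= leq_addr.
suff: \sum_(0 <= i < N + k) (if (N <= i)%N then w i else 0) = 2 * w N - 2 * w (N + k) by
  move=> ->; have := w_ge0 (N + k); have := w_ge0 N; lra.
elim: k {IH} => [|k IH]; first by rewrite addn0 H0 //; lra.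
rewrite addnS big_nat_recr //= leq_addr IH wS; lra.
Qed.

End Geo.

Section Geo2.
Variable R : realType.
Local Notation w := (@w R).

Lemma geo_esum (S : set nat) (f : nat -> \bar R) (s b : R) N :
  0 <= s -> 0 <= b ->
  (forall i, S i -> (f i <= (w i * b)%:E)%E) ->
  (forall i, S i -> (i < N)%N -> (f i <= (w i * s)%:E)%E) ->
  (\esum_(i in S) f i <= (2 * s + 2 * b * w N)%:E)%E.
Proof.
move=> s0 b0 fb fs.
apply: ge_ereal_sup => _ [F [finF FS] <-].
rewrite fsbig_finite //=.
pose y := fun i => if (i < N)%N then s else b.
apply: (@le_trans _ _ (\sum_(i <- fset_set F) (w i * y i)%:E)%E).
  rewrite big_seq [X in (_ <= X)%E]big_seq; apply: lee_sum => i.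
  rewrite in_fset_set // => /set_mem /FS Si; rewrite /y; case: ifP => Hi.
    exact: fs.
  exact: fb.
pose n := (\max_(k <- fset_set F) k).+1.
apply: (le_trans (lee_sum_fset_nat (fset_set F) n xpredT _ _)).
- by move=> i _; rewrite lee_fin mulr_ge0 // ?(@w_ge0 R) // /y; case: ifP.
- move=> k /= kF; rewrite /n big_seq_fsetE/=.
  by rewrite -[k]/(val [`kF]%fset) ltnS leq_bigmax.
rewrite sumEFin lee_fin.
apply: (@le_trans _ _ (\sum_(0 <= i < n) (w i * s + (if (N <= i)%N then w i else 0) * b))).
  apply: ler_sum => i _; rewrite /y; case: ifP => Hi.
    rewrite ifF; last by apply/negbTE; rewrite -ltnNge.
    by rewrite mul0r addr0.
  rewrite ifT; last by rewrite leqNgt Hi.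
  have := @w_ge0 R i => ?; by rewrite ler_wpDl // mulr_ge0.
rewrite big_split /= -mulr_suml -mulr_suml (@sum_w R).
have := sum_w_tail R N n; have := @w_ge0 R n; have := @w_ge0 R N => ? ? ?.
nra.
Qed.
End Geo2.

End Geo.
Import Geo.

Module Grp.

Section Grp.
Context {G : topologicalType} {mul : G -> G -> G} {inv : G -> G} {e : G}.
Context (HG : lc_group mul inv e).

Lemma gA x y z : mul x (mul y z) = mul (mul x y) z.
Proof. by case: HG => -[]. Qed.
Lemma g1m x : mul e x = x.
Proof. by case: HG => -[_ /(_ x) []]. Qed.
Lemma gm1 x : mul x e = x.
Proof. by case: HG => -[_ /(_ x) []]. Qed.
Lemma gVm x : mul (inv x) x = e.
Proof. by case: HG => -[_ _ /(_ x) []]. Qed.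
Lemma gmV x : mul x (inv x) = e.
Proof. by case: HG => -[_ _ /(_ x) []]. Qed.
Lemma gKm x z : mul (inv x) (mul x z) = z.
Proof. by rewrite gA gVm g1m. Qed.
Lemma gKVm x z : mul x (mul (inv x) z) = z.
Proof. by rewrite gA gmV g1m. Qed.
Lemma gIu x y : mul x y = e -> y = inv x.
Proof. by move=> H; rewrite -(gKm x y) H gm1. Qed.
Lemma gIK x : inv (inv x) = x.
Proof. by apply/esym/gIu; rewrite gVm. Qed.
Lemma gIM x y : inv (mul x y) = mul (inv y) (inv x).
Proof.
apply/esym/gIu; rewrite -gA (gA y) gmV g1m gmV //.
Qed.
Lemma gI1 : inv e = e.
Proof. by apply/esym/gIu; rewrite gm1. Qed.

Lemma mul_cont : continuous (fun p : G * G => mul p.1 p.2).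
Proof. by case: HG => _ []. Qed.
Lemma inv_cont : continuous inv.
Proof. by case: HG => _ []. Qed.

Lemma cont_mulf (T : topologicalType) (f g : T -> G) x :
  {for x, continuous f} -> {for x, continuous g} ->
  {for x, continuous (fun t => mul (f t) (g t))}.
Proof.
move=> cf cg.
have cp : {for x, continuous (fun t => (f t, g t))}.
  exact: cvg_pair.
exact: (continuous_comp cp (mul_cont (f x, g x))).
Qed.

Lemma cont_invf (T : topologicalType) (f : T -> G) x :
  {for x, continuous f} -> {for x, continuous (fun t => inv (f t))}.
Proof. by move=> cf; exact: (continuous_comp cf (inv_cont (f x))). Qed.

Lemma cont_cst (T : topologicalType) (a : G) x : {for x, continuous (fun _ : T => a)}.
Proof. exact: cvg_cst. Qed.

Lemma cont_id x : {for x, continuous (fun t : G => t)}.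
Proof. exact: cvg_id. Qed.

End Grp.

End Grp.
Import Grp.

Module Cov.

Lemma cover_seq (T : topologicalType) (J : eqType) (K : set T) (good : J -> Prop)
  (B : J -> set T) :
  compact K -> (forall j, open (B j)) -> (forall x, K x -> exists j, good j /\ B j x) ->
  exists s : seq J, (forall j, j \in s -> good j) /\
     forall x, K x -> exists j, j \in s /\ B j x.
Proof.
move=> cK oB hK.
have nc := (compact_near_coveringP K).1 cK.
pose F : set_system (seq J) := [set Q | exists t : seq J, (forall j, j \in t -> good j) /\
   forall s : seq J, {subset t <= s} -> (forall j, j \in s -> good j) -> Q s].
have FF : Filter F.
  constructor.
  - by exists [::].
  - move=> P Q [t1 [g1 h1]] [t2 [g2 h2]]; exists (t1 ++ t2); split.
      by move=> j; rewrite mem_cat => /orP[/g1|/g2].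
    move=> s sub gs; split.
      by apply: h1 => // j jt; apply: sub; rewrite mem_cat jt.
    by apply: h2 => // j jt; apply: sub; rewrite mem_cat jt orbT.
  - by move=> P Q PQ [t [gt h]]; exists t; split => // s ss gs; apply: PQ; apply: h.
have := nc (seq J) F (fun s x => exists j, j \in s /\ B j x) FF.
case.
- move=> x Kx; have [j [gj Bjx]] := hK x Kx.
  exists (B j, [set s : seq J | j \in s]) => /=.
    split; first by apply: open_nbhs_nbhs; split.
    exists [:: j]; split; first by move=> j'; rewrite inE => /eqP ->.
    by move=> s ss _; apply: ss; rewrite inE.
  by move=> [x' s] /= [Bx' js]; exists j.
- move=> t [gt h]; exists t; split => //.
  by move=> x Kx; apply: (h t) => //.
Qed.

End Cov.
Import Cov.

Module Bas.

Section Bas.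
Context {G : topologicalType} (mul : G -> G -> G) (inv : G -> G) (e : G).
Context (HG : lc_group mul inv e).
Context (I : set nat) (K : nat -> set G)
  (HK : forall i, I i -> compact (K i) /\ interior (K i) !=set0)
  (HKgen : generates mul inv e (\bigcup_(i in I) K i)).
Local Notation gA := (gA HG).
Local Notation g1m := (g1m HG).
Local Notation gm1 := (gm1 HG).
Local Notation gVm := (gVm HG).
Local Notation gmV := (gmV HG).
Local Notation gKm := (gKm HG).
Local Notation gKVm := (gKVm HG).
Local Notation gIK := (gIK HG).
Local Notation gIM := (gIM HG).
Local Notation gI1 := (gI1 HG).
Local Notation cont_mulf := (cont_mulf HG).
Local Notation cont_invf := (cont_invf HG).

Lemma ltrans_cont (a : G) : continuous (fun z => mul a z).
Proof. by move=> x; apply: (@Grp.cont_mulf _ _ _ _ HG G (fun _ => a) (fun z => z) x); [exact: cont_cst|exact: cont_id]. Qed.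

Lemma open_ltrans (a : G) (O : set G) : open O -> open [set z | O (mul a z)].
Proof. by move=> oO; apply: (open_comp (f := fun z => mul a z)) => // x _; apply: ltrans_cont. Qed.

Lemma basis_exists : exists U : nat -> set G, (forall n, nbhs e (U n)) /\
  (forall V, nbhs e V -> exists n, U n `<=` V) /\
  exists B : (seq (bool * (nat * nat * nat)) * nat) -> set G,
   (forall j, open (B j)) /\ (forall y W, nbhs y W -> exists j, B j y /\ B j `<=` W).
Proof.
have [_ [_ _ _ _ [U [Ue Ubase]]]] := HG.
exists U; split => //; split => //.
have Hs : forall p : nat * nat, exists s : seq G, I p.1 ->
    forall y, K p.1 y -> exists x, x \in s /\ (U p.2)° (mul (inv x) y).
  move=> [i n] /=; case: (pselect (I i)) => Ii; last by exists [::].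
  have hcov : forall y, K i y -> exists x, True /\ [set z | (U n)° (mul (inv x) z)] y.
    move=> y Ky; exists y; split => //=; rewrite gVm //.
    exact: nbhs_singleton (nbhs_interior (Ue n)).
  have [s [_ hs]] := @cover_seq G G (K i) (fun _ => True)
     (fun x => [set z | (U n)° (mul (inv x) z)]) (HK i Ii).1
     (fun x => open_ltrans (inv x) _ (open_interior (U n))) hcov.
  by exists s => _ y Ky; have [x [xs Bx]] := hs y Ky; exists x.
have [Fs HFs] := choice Hs.
pose q0 (t : nat * nat * nat) := nth e (Fs (t.1.1, t.1.2)) t.2.
pose ev := fix ev (w : seq (bool * (nat * nat * nat))) :=
  if w is p :: w' then mul (if p.1 then q0 p.2 else inv (q0 p.2)) (ev w') else e.
pose iw (w : seq (bool * (nat * nat * nat))) := rev (map (fun p => (~~ p.1, p.2)) w).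
have evcat w1 w2 : ev (w1 ++ w2) = mul (ev w1) (ev w2).
  elim: w1 => [|p w IH] /=; first by rewrite g1m.
  by rewrite IH gA.
have eviw w : ev (iw w) = inv (ev w).
  elim: w => [|p w IH]; first by rewrite /= gI1.
  rewrite /iw map_cons rev_cons -cats1 evcat -/(iw w) IH /= gm1 gIM.
  by case: p.1 => //=; rewrite gIK.
have hV2 : forall A, nbhs e A -> nbhs e [set w | A (inv w)].
  move=> A hA; have := cont_invf _ _ _ (cont_id e).
  by rewrite /prop_for /continuous_at /= gI1; apply.
pose H := [set x : G | forall O : set G, nbhs x O -> exists w, O (ev w)].
have Hall : H = setT.
  apply: HKgen.
  - by move=> O /nbhs_singleton Oe; exists [::].
  - move=> x y Hx Hy O hO.
    have cph : {for (x, y), continuous (fun p : G * G => mul p.1 (inv p.2))}.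
      apply: cont_mulf => //; first exact: cvg_fst.
      by apply: cont_invf => //; exact: cvg_snd.
    have := cph _ hO; case=> [[A1 A2]] /= [nA1 nA2] sub.
    have [w1 A1w1] := Hx _ nA1; have [w2 A2w2] := Hy _ nA2.
    exists (w1 ++ iw w2); rewrite evcat eviw.
    by have := sub (ev w1, ev w2); apply.
  - move=> y [i Ii Kiy] O hO.
    have hV := ltrans_cont y e; rewrite /continuous_at gm1 in hV.
    have nV := hV _ hO.
    have [n Un] := Ubase _ (hV2 _ nV).
    have [x [xs Ux]] := HFs (i, n) Ii y Kiy.
    exists [:: (true, (i, n, index x (Fs (i, n))))] => /=.
    rewrite /q0 /= nth_index // gm1.
    have := Un _ (interior_subset Ux) => /=.
    by rewrite gIM gIK gKVm.
exists (fun j => [set z | (U j.2)° (mul (inv (ev j.1)) z)]); split.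
  by move=> j; apply: open_ltrans; exact: open_interior.
move=> y W hW.
have cps : {for (e, e), continuous (fun p : G * G => mul y (mul p.1 p.2))}.
  apply: cont_mulf => //; first exact: cont_cst.
  by apply: cont_mulf => //; [exact: cvg_fst|exact: cvg_snd].
have := cps W; rewrite /= gm1 gm1 => /(_ hW).
case=> [[V1 V2]] /= [nV1 nV2] sub.
have [n Un] := Ubase _ (filterI nV1 nV2).
have nZ : nbhs e ((U n)° `&` [set w | (V1 `&` V2) (inv w)]).
  by apply: filterI; [exact: nbhs_interior|exact: hV2 _ (filterI nV1 nV2)].
have cq : {for y, continuous (fun q => mul (inv q) y)}.
  by apply: cont_mulf => //; [apply: cont_invf; exact: cont_id|exact: cont_cst].
have := cq _; rewrite /continuous_at gVm => /(_ _ nZ) nq.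
have : H y by rewrite Hall.
move=> /(_ _ nq) [w [Uw Vw]].
exists (w, n); split => //= z Uz.
have := sub (inv (mul (inv (ev w)) y), mul (inv (ev w)) z) => /=.
rewrite gIM gIK -gA gKVm gKVm; apply; split.
  by move: Vw; rewrite /= gIM gIK => -[].
by have [] := Un _ (interior_subset Uz).
Qed.

End Bas.

End Bas.
Import Bas.

Module Meas.

Section Meas.
Context {R : realType} {d : measure_display} {X : measurableType d}.
Variable mu : probability X R.
Implicit Types (U V W C N A B : set X).

Definition mm (U : set X) : R := fine (mu U).

Lemma muE {U} : measurable U -> mu U = (mm U)%:E.
Proof. by move=> mU; rewrite /mm fineK // fin_num_measure. Qed.

Lemma mm_ge0 U : 0 <= mm U.
Proof. by rewrite /mm fine_ge0 // measure_ge0. Qed.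

Lemma mm_le1 {U} : measurable U -> mm U <= 1.
Proof. by move=> mU; rewrite -lee_fin -muE // probability_le1. Qed.

Lemma mm_le {U V} : measurable U -> measurable V -> U `<=` V -> mm U <= mm V.
Proof. by move=> mU mV UV; rewrite -lee_fin -!muE //; apply: le_measure => //; exact: mem_set. Qed.

Lemma mm_U {U V} : measurable U -> measurable V -> mm (U `|` V) <= mm U + mm V.
Proof.
by move=> mU mV; rewrite -lee_fin EFinD -!muE //; [exact: measureU2|exact: measurableU].
Qed.

Lemma mm_DI {U V} : measurable U -> measurable V -> mm U = mm (U `\` V) + mm (U `&` V).
Proof.
move=> mU mV; apply/eqP; rewrite -(@eqe R) EFinD -!muE //;
  [exact/eqP/measureDI|exact: measurableI|exact: measurableD].
Qed.

Lemma symdiffC (U V : set X) : symdiff U V = symdiff V U.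
Proof. by rewrite /symdiff setUC. Qed.

Lemma symdiff_meas {U V} : measurable U -> measurable V -> measurable (symdiff U V).
Proof. by move=> mU mV; apply: measurableU; apply: measurableD. Qed.

Lemma mm_symdiff_tri {U V W} : measurable U -> measurable V -> measurable W ->
  mm (symdiff U W) <= mm (symdiff U V) + mm (symdiff V W).
Proof.
move=> mU mV mW; apply: (le_trans _ (mm_U (symdiff_meas mU mV) (symdiff_meas mV mW))).
apply: mm_le; do ?apply: symdiff_meas => //; first by apply: measurableU; apply: symdiff_meas.
move=> x; rewrite /symdiff /=; case: (pselect (V x)) => Vx; tauto.
Qed.

Lemma mm_symdiff_le {U V} : measurable U -> measurable V ->
  mm (symdiff U V) <= mm (U `\` V) + mm (V `\` U).
Proof. by move=> mU mV; apply: mm_U; apply: measurableD. Qed.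

Lemma mm_I_diff {U V C} : measurable U -> measurable V -> measurable C ->
  `| mm (U `&` C) - mm (V `&` C) | <= mm (symdiff U V).
Proof.
move=> mU mV mC.
have h : forall U V : set X, measurable U -> measurable V ->
    mm (U `&` C) <= mm (V `&` C) + mm (symdiff U V).
  move=> U' V' mU' mV'.
  apply: (le_trans _ (mm_U (measurableI _ _ mV' mC) (symdiff_meas mU' mV'))).
  apply: mm_le; do ?apply: measurableI => //; first by apply: measurableU;
    [apply: measurableI|apply: symdiff_meas].
  move=> x [U'x Cx]; rewrite /symdiff /=; case: (pselect (V' x)) => V'x; tauto.
have h1 := h _ _ mU mV; have h2 := h _ _ mV mU; rewrite symdiffC in h2.
rewrite ler_norml; apply/andP; split; lra.
Qed.

Lemma mu_null_eq {U V N} : measurable U -> measurable V -> measurable N -> mu N = 0%E ->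
  U `<=` V `|` N -> V `<=` U `|` N -> mu U = mu V.
Proof.
move=> mU mV mN N0 UV VU; apply/eqP; rewrite eq_le; apply/andP; split.
  apply: (le_trans (le_measure _ (mem_set mU) (mem_set (measurableU _ _ mV mN)) UV)).
  apply: (le_trans (measureU2 mu mV mN)); rewrite -[leRHS]adde0; apply: leeD => //.
  by rewrite le_eqVlt; apply/orP; left; apply/eqP; exact: N0.
apply: (le_trans (le_measure _ (mem_set mV) (mem_set (measurableU _ _ mU mN)) VU)).
apply: (le_trans (measureU2 mu mU mN)); rewrite -[leRHS]adde0; apply: leeD => //.
by rewrite le_eqVlt; apply/orP; left; apply/eqP; exact: N0.
Qed.

Section Aut.
Variable t : inv_map X.
Hypothesis ht : in_Aut mu t.

Lemma img_meas {A} : measurable A -> measurable (img t A).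
Proof.
move=> mA; case: ht => [_ [mb _] _ _].
by have := mb measurableT A mA; rewrite setTI.
Qed.

Lemma preimg_meas {A} : measurable A -> measurable (preimg t A).
Proof.
move=> mA; case: ht => [[mf _] _ _ _].
by have := mf measurableT A mA; rewrite setTI.
Qed.

Lemma mu_img {A} : measurable A -> mu (img t A) = mu A.
Proof. by move=> mA; case: ht => [_ [_ pb] _ _]; exact: pb. Qed.

Lemma mu_preimg {A} : measurable A -> mu (preimg t A) = mu A.
Proof. by move=> mA; case: ht => [[_ pf] _ _ _]; exact: pf. Qed.

Lemma mu_preimgI {A B} : measurable A -> measurable B ->
  mu (preimg t A `&` B) = mu (A `&` img t B).
Proof.
move=> mA mB.
have mIB := img_meas mB.
case: ht => [[mf pf] _ [N [mN N0 sN]] _].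
rewrite -[RHS]pf; last by apply: measurableI.
have mf' : forall Y : set X, measurable Y -> measurable (fwd t @^-1` Y).
  by move=> Y mY; have := mf measurableT Y mY; rewrite setTI.
apply: (mu_null_eq _ _ mN N0).
- by apply: measurableI => //; exact: preimg_meas.
- by apply: mf'; exact: measurableI.
- move=> x [Ax Bx]; case: (pselect (N x)) => Nx; [by right|left].
  split => //; rewrite /img /=.
  have : bwd t (fwd t x) = x.
    by apply: contrapT => hx; apply: Nx; apply: sN.
  by move=> ->.
- move=> x [Ax Bx]; case: (pselect (N x)) => Nx; [by right|left].
  split => //.
  have : bwd t (fwd t x) = x.
    by apply: contrapT => hx; apply: Nx; apply: sN.
  by move: Bx; rewrite /img /= => + E; rewrite E.
Qed.

End Aut.
End Meas.

End Meas.
Import Meas.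

Module Cont.

Section Cont.
Context {R : realType} {d : measure_display} {X : measurableType d}.
Variable mu : probability X R.
Context {G : topologicalType}.
Local Notation mm := (mm mu).

Lemma cont_symdiff (F : G -> set X) (c : R) :
  (forall g, measurable (F g)) -> (forall g, mm (F g) = c) ->
  (forall B, measurable B -> continuous (fun g => mm (F g `&` B))) ->
  forall y (dl : R), 0 < dl -> \forall g \near y, mm (symdiff (F g) (F y)) < dl.
Proof.
move=> mF cF hc y dl dl0.
have H0 := cvgr_dist_lt _ _ (hc (F y) (mF y) y) (dl / 2) (divr_gt0 dl0 (ltr0Sn _ 1)).
have H := H0 (nbhs_filter y).
near=> g.
have Hg : `|mm (F y `&` F y) - mm (F g `&` F y)| < dl / 2 by exact: (near H g).
rewrite setIid cF in Hg.
apply: (le_lt_trans (mm_symdiff_le mu (mF g) (mF y))).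
have h1 := mm_DI mu (mF g) (mF y); have h2 := mm_DI mu (mF y) (mF g).
rewrite setIC cF in h2; rewrite cF in h1.
move: Hg; rewrite ltr_norml => /andP[a b]; lra.
Unshelve. all: by end_near.
Qed.

Variable mul : G -> G -> G.
Variable T : G -> inv_map X.
Hypothesis hT : is_action mul mu T.

Lemma act_aut g : in_Aut mu (T g).
Proof. by case: hT. Qed.

Lemma cont_img (A : set X) : measurable A ->
  forall y (dl : R), 0 < dl -> \forall g \near y, mm (symdiff (img (T g) A) (img (T y) A)) < dl.
Proof.
move=> mA.
have h1 : forall g, measurable (img (T g) A).
  by move=> g; apply: img_meas => //; exact: act_aut.
have h2 : forall g, mm (img (T g) A) = mm A.
  by move=> g; rewrite /Meas.mm mu_img //; exact: act_aut.
have h3 : forall B, measurable B -> continuous (fun g => mm (img (T g) A `&` B)).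
  move=> B mB; case: hT => _ _ /(_ A B mA mB) H; exact: H.
exact: (cont_symdiff (fun g => img (T g) A) (mm A) h1 h2 h3).
Qed.

Lemma cont_preimg (A : set X) : measurable A ->
  forall y (dl : R), 0 < dl -> \forall g \near y, mm (symdiff (preimg (T g) A) (preimg (T y) A)) < dl.
Proof.
move=> mA.
have h1 : forall g, measurable (preimg (T g) A).
  by move=> g; apply: preimg_meas => //; exact: act_aut.
have h2 : forall g, mm (preimg (T g) A) = mm A.
  by move=> g; rewrite /Meas.mm mu_preimg //; exact: act_aut.
have h3 : forall B, measurable B -> continuous (fun g => mm (preimg (T g) A `&` B)).
  move=> B mB.
  have -> : (fun g => mm (preimg (T g) A `&` B)) = (fun g => mm (img (T g) B `&` A)).
    apply: funext => g; rewrite /Meas.mm mu_preimgI //; last exact: act_aut.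
    by rewrite setIC.
  case: hT => _ _ /(_ B A mB mA) H; exact: H.
exact: (cont_symdiff (fun g => preimg (T g) A) (mm A) h1 h2 h3).
Qed.

Variable A : nat -> set X.
Hypothesis mA : forall i, measurable (A i).
Hypothesis Adense : forall B : set X, measurable B -> forall eps : R, 0 < eps ->
              exists i, (mu (symdiff (A i) B) < eps%:E)%E.

Definition lgood (dl : R) (g : G) (l : nat) (jj : nat * nat) :=
  mm (symdiff (img (T g) (A l)) (A jj.1)) < dl /\
  mm (symdiff (preimg (T g) (A l)) (A jj.2)) < dl.

Lemma approx (B : set X) (dl : R) : measurable B -> 0 < dl ->
  exists j, mm (symdiff B (A j)) < dl.
Proof.
move=> mB dl0; have [j hj] := Adense _ mB _ dl0; exists j.
by rewrite symdiffC -lte_fin -(muE mu) //; apply: symdiff_meas.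
Qed.

Lemma local_cert (dl : R) (N : nat) (y : G) : 0 < dl ->
  exists js : seq (nat * nat), size js = N /\
   \forall g \near y, forall l, (l < N)%N -> lgood dl g l (nth (0%N, 0%N) js l).
Proof.
move=> dl0; elim: N => [|N [js [sj hjs]]].
  by exists [::]; split => //; apply: nearW.
have dl2 : 0 < dl / 2 by apply: divr_gt0 => //; exact: ltr0Sn.
have autY := act_aut y.
have [j1 hj1] := approx _ _ (img_meas mu _ autY (mA N)) dl2.
have [j2 hj2] := approx _ _ (preimg_meas mu _ autY (mA N)) dl2.
exists (rcons js (j1, j2)); split; first by rewrite size_rcons sj.
have c1 := cont_img _ (mA N) y _ dl2; have c2 := cont_preimg _ (mA N) y _ dl2.
near=> g => l.
have hg : forall l, (l < N)%N -> lgood dl g l (nth (0%N, 0%N) js l) by near: g; exact: hjs.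
have g1 : mm (symdiff (img (T g) (A N)) (img (T y) (A N))) < dl / 2 by near: g; exact: c1.
have g2 : mm (symdiff (preimg (T g) (A N)) (preimg (T y) (A N))) < dl / 2 by near: g; exact: c2.
rewrite ltnS leq_eqVlt => /orP[/eqP ->|lN].
  rewrite nth_rcons sj ltnn eqxx; split => /=.
    apply: (le_lt_trans (mm_symdiff_tri mu _ (img_meas mu _ autY (mA N)) _)).
    - by apply: img_meas; [exact: act_aut|exact: mA].
    - exact: mA.
    - simpl; lra.
  apply: (le_lt_trans (mm_symdiff_tri mu _ (preimg_meas mu _ autY (mA N)) _)).
  - by apply: preimg_meas; [exact: act_aut|exact: mA].
  - exact: mA.
  - simpl; lra.
by rewrite nth_rcons sj lN; apply: hg.
Unshelve. all: by end_near.
Qed.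

End Cont.

End Cont.
Import Cont.

Module Main.

Section Main.
Context (R : realType) (d : measure_display) (X : measurableType d) (mu : probability X R).
Context (A : nat -> set X) (mA : forall i, measurable (A i))
  (Adense : forall B : set X, measurable B -> forall eps : R, 0 < eps ->
              exists i, (mu (symdiff (A i) B) < eps%:E)%E).
Context (G : topologicalType) (mul : G -> G -> G).
Context (I : set nat) (K : nat -> set G)
  (HK : forall i, I i -> compact (K i) /\ interior (K i) !=set0).
Context (Gam : set G).
Local Notation mm := (mm mu).
Local Notation w := (w R).

Definition mu' : {measure set X -> \bar R} := mu.

Lemma muE' U : measurable U -> mu' U = (mm U)%:E.
Proof. exact: muE. Qed.

Lemma muE'' U : measurable U -> mu U = (mm U)%:E.
Proof. exact: muE. Qed.

Lemma dist_d_bound (t s : inv_map X) (ht : in_Aut mu t) (hs : in_Aut mu s) (N : nat) (c : R) :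
  0 <= c ->
  (forall l, (l < N)%N -> mm (symdiff (img t (A l)) (img s (A l))) +
                          mm (symdiff (preimg t (A l)) (preimg s (A l))) <= c) ->
  (dist_d mu A t s <= (2 * c + 2 * 2 * w N)%:E)%E.
Proof.
move=> c0 hc; apply: geo_esum => //.
- move=> l _.
  have m1 : measurable (symdiff (img t (A l)) (img s (A l))).
    by apply: symdiff_meas; [exact: (img_meas mu _ ht (mA l))|exact: (img_meas mu _ hs (mA l))].
  have m2 : measurable (symdiff (preimg t (A l)) (preimg s (A l))).
    by apply: symdiff_meas; [exact: (preimg_meas mu _ ht (mA l))|exact: (preimg_meas mu _ hs (mA l))].
  rewrite (muE' _ m1) (muE' _ m2) -EFinD -EFinM lee_fin.
  apply: ler_wpM2l; first exact: w_ge0.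
  by have := mm_le1 mu m1; have := mm_le1 mu m2; lra.
- move=> l _ lN.
  have m1 : measurable (symdiff (img t (A l)) (img s (A l))).
    by apply: symdiff_meas; [exact: (img_meas mu _ ht (mA l))|exact: (img_meas mu _ hs (mA l))].
  have m2 : measurable (symdiff (preimg t (A l)) (preimg s (A l))).
    by apply: symdiff_meas; [exact: (preimg_meas mu _ ht (mA l))|exact: (preimg_meas mu _ hs (mA l))].
  rewrite (muE' _ m1) (muE' _ m2) -EFinD -EFinM lee_fin.
  by apply: ler_wpM2l; [exact: w_ge0|exact: hc].
Qed.


Lemma w_le1 n : w n <= 1.
Proof. by rewrite /Geo.w exprn_ile1 // ?invr_ge0 // invf_le1 // ler1n. Qed.

Lemma wD i j : w (i + j) = w i * w j.
Proof. by rewrite /Geo.w exprD. Qed.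

Lemma mm_I_le1 (t : inv_map X) (ht : in_Aut mu t) i j :
  0 <= mm (img t (A i) `&` A j) <= 1.
Proof.
rewrite mm_ge0 /= mm_le1 //; apply: measurableI; last exact: mA.
exact: (img_meas mu _ ht (mA i)).
Qed.

Lemma dist_a_bound (t s : inv_map X) (ht : in_Aut mu t) (hs : in_Aut mu s) (N : nat) (c : R) :
  0 <= c -> c <= 1 ->
  (forall i j, (i < N)%N -> (j < N)%N ->
     `| mm (img t (A i) `&` A j) - mm (img s (A i) `&` A j) | <= c) ->
  (dist_a mu A t s <= (4 * c + 12 * w N)%:E)%E.
Proof.
move=> c0 c1 hc.
pose x i j := `| mm (img t (A i) `&` A j) - mm (img s (A i) `&` A j) |.
have x0 i j : 0 <= x i j by rewrite /x normr_ge0.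
have x1 i j : x i j <= 1.
  have := mm_I_le1 _ ht i j; have := mm_I_le1 _ hs i j.
  rewrite /x ler_norml => /andP[? ?] /andP[? ?]; apply/andP; split; lra.
have eq1 : [set: nat * nat] = [set: nat] `*`` (fun _ => [set: nat]).
  by apply/seteqP; split => -[i j].
have mI : forall (u : inv_map X), in_Aut mu u -> forall i j, measurable (img u (A i) `&` A j).
  by move=> u hu i j; apply: measurableI; [exact: (img_meas mu _ hu (mA i))|exact: mA].
have term : forall i j, ((w (i + j))%:E *
    `| mu' (img t (A i) `&` A j) - mu' (img s (A i) `&` A j) |)%E = (w j * (w i * x i j))%:E.
  move=> i j; rewrite (muE' _ (mI _ ht i j)) (muE' _ (mI _ hs i j)) -EFinB abse_EFin -EFinM.
  by congr EFin; rewrite wD /x; ring.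
rewrite /dist_a eq1 -(@esum_esum R nat nat setT (fun _ => setT) (fun i j => ((w (i + j))%:E *
    `| mu' (img t (A i) `&` A j) - mu' (img s (A i) `&` A j) |)%E)); last first.
  by move=> i j _ _; rewrite term lee_fin mulr_ge0 ?mulr_ge0 ?w_ge0.
apply: (le_trans (geo_esum _ _ _ (2 * c + 2 * w N) (4) N _ _ _ _)).
- by have := w_ge0 R N; lra.
- by [].
- move=> i _; under eq_esum do rewrite term.
  apply: (le_trans (geo_esum _ _ _ (w i) (w i) N _ _ _ _)).
  + exact: w_ge0.
  + exact: w_ge0.
  + by move=> j _; rewrite lee_fin ler_wpM2l ?w_ge0 // ler_piMr ?w_ge0.
  + by move=> j _ _; rewrite lee_fin ler_wpM2l ?w_ge0 // ler_piMr ?w_ge0.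
  + rewrite lee_fin; have := w_ge0 R i; have := w_le1 N; have := w_ge0 R N => ? ? ?; nra.
- move=> i _ iN; under eq_esum do rewrite term.
  apply: (le_trans (geo_esum _ _ _ (w i * c) (w i) N _ _ _ _)).
  + by rewrite mulr_ge0 ?w_ge0.
  + exact: w_ge0.
  + by move=> j _; rewrite lee_fin ler_wpM2l ?w_ge0 // ler_piMr ?w_ge0.
  + by move=> j _ jN; rewrite lee_fin ler_wpM2l ?w_ge0 // ler_wpM2l ?w_ge0 // hc.
  + by rewrite lee_fin le_eqVlt; apply/orP; left; apply/eqP; ring.
- by rewrite lee_fin; lra.
Qed.

Definition J0 := (seq (bool * (nat * nat * nat)) * nat)%type.
Definition J := (J0 * seq (nat * nat))%type.
Context (B : J0 -> set G) (oB : forall j, open (B j))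
  (HB : forall (y : G) (W : set G), nbhs y W -> exists j, B j y /\ B j `<=` W).

Definition dl (k : nat) : R := (k.+1%:R)^-1.
Lemma dl_gt0 k : 0 < dl k. Proof. by rewrite /dl invr_gt0 ltr0Sn. Qed.

Definition covered (L : seq J) (g : G) := exists c, c \in L /\ B c.1 g.
Definition cellgood (k : nat) (T : G -> inv_map X) (c : J) :=
  forall g, B c.1 g -> forall l, (l < k)%N -> lgood mu T A (dl k) g l (nth (0%N, 0%N) c.2 l).
Definition Good k (L : seq J) T :=
  [/\ forall c, c \in L -> cellgood k T c,
      forall i, I i -> (i < k)%N -> K i `<=` covered L &
      forall g, Gam g -> ~ covered L g -> forall i j, (i < k)%N -> (j < k)%N ->
        `| mm (img (T g) (A i) `&` A j) - mm (A i) * mm (A j) | < dl k ].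

Lemma point_cell k T (hT : is_action mul mu T) y : exists c, cellgood k T c /\ B c.1 y.
Proof.
have [js [_ hjs]] := local_cert mu mul T hT A mA Adense (dl k) k y (dl_gt0 k).
have [j0 [Bj0 sub]] := HB _ _ hjs.
by exists (j0, js); split => // g /sub Pg l lk; exact: Pg l lk.
Qed.

Lemma cover_compacts k T (hT : is_action mul mu T) n (Cs : nat -> set G) :
  (forall p, (p < n)%N -> compact (Cs p)) ->
  exists L, (forall c, c \in L -> cellgood k T c) /\ forall p, (p < n)%N -> Cs p `<=` covered L.
Proof.
elim: n => [|n IH] hC; first by exists [::]; split.
have [L1 [g1 c1]] := IH (fun p pn => hC p (leqW pn)).
have [s [gs cs]] := @cover_seq G J (Cs n) (cellgood k T) (fun c => B c.1) (hC n (ltnSn n))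
   (fun c => oB c.1) (fun y _ => point_cell k T hT y).
exists (L1 ++ s); split.
  by move=> c; rewrite mem_cat => /orP[/g1|/gs].
move=> p; rewrite ltnS leq_eqVlt => /orP[/eqP ->|pn] y Cy.
  by have [c [cs' Bc]] := cs y Cy; exists c; split => //; rewrite mem_cat cs' orbT.
by have [c [cL Bc]] := c1 p pn y Cy; exists c; rewrite mem_cat cL.
Qed.

Lemma good_exists k T : (0 < k)%N -> is_mixing mul mu Gam T -> exists L, Good k L T.
Proof.
move=> k0 [hT hmix].
have hC : forall p : nat, exists C : set G, compact C /\ forall g, Gam g -> ~ C g ->
   `| mm (img (T g) (A (p %/ k)) `&` A (p %% k)) - mm (A (p %/ k)) * mm (A (p %% k)) | < dl k.
  by move=> p; have [C [cC hC]] := hmix (A (p %/ k)) (A (p %% k)) (mA _) (mA _) _ (dl_gt0 k); exists C.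
have [Cs hCs] := choice hC.
have [L1 [g1 c1]] := cover_compacts k T hT (k * k) Cs (fun p _ => (hCs p).1).
have hK2 : forall i, (i < k)%N -> compact (if pselect (I i) then K i else set0).
  by move=> i _; case: (pselect (I i)) => Ii; [exact: (HK i Ii).1|exact: compact0].
have [L2 [g2 c2]] := cover_compacts k T hT k (fun i => if pselect (I i) then K i else set0) hK2.
exists (L1 ++ L2); split.
- by move=> c; rewrite mem_cat => /orP[/g1|/g2].
- move=> i Ii ik y Ky; have := c2 i ik y; case: (pselect (I i)) => // _ /(_ Ky) [c [cL Bc]].
  by exists c; rewrite mem_cat cL orbT.
- move=> g Gg ncov i j ik jk.
  have pk : (i * k + j < k * k)%N by nia.
  have := (hCs (i * k + j)).2 g Gg.
  rewrite divnMDl // divn_small // addn0 modnMDl modn_small //; apply.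
  move=> Cg; apply: ncov; have [c [cL Bc]] := c1 _ pk g Cg; exists c.
  by rewrite mem_cat cL.
Qed.

Definition pick (k : nat) (L : seq J) : G -> inv_map X :=
  match pselect (exists S, is_mixing mul mu Gam S /\ Good k L S) with
  | left h => projT1 (cid h)
  | right _ => fun _ => InvMap (fun x : X => x) (fun x : X => x)
  end.

Lemma pick_spec k L : (exists S, is_mixing mul mu Gam S /\ Good k L S) ->
  is_mixing mul mu Gam (pick k L) /\ Good k L (pick k L).
Proof. by rewrite /pick; case: pselect => // h _; exact: projT2 (cid h). Qed.

Lemma covered_close k L T S g : is_action mul mu T -> is_action mul mu S ->
  Good k L T -> Good k L S -> covered L g -> forall l, (l < k)%N ->
  mm (symdiff (img (T g) (A l)) (img (S g) (A l))) < 2 * dl k /\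
  mm (symdiff (preimg (T g) (A l)) (preimg (S g) (A l))) < 2 * dl k.
Proof.
move=> hT hS [gT _ _] [gS _ _] [c [cL Bc]] l lk.
have [t1 t2] := gT c cL g Bc l lk; have [s1 s2] := gS c cL g Bc l lk.
have aT := act_aut mu mul T hT g; have aS := act_aut mu mul S hS g.
split.
- apply: (le_lt_trans (mm_symdiff_tri mu (img_meas mu _ aT (mA l))
     (mA (nth (0%N, 0%N) c.2 l).1) (img_meas mu _ aS (mA l)))).
  by rewrite (symdiffC (A _)); lra.
- apply: (le_lt_trans (mm_symdiff_tri mu (preimg_meas mu _ aT (mA l))
     (mA (nth (0%N, 0%N) c.2 l).2) (preimg_meas mu _ aS (mA l)))).
  by rewrite (symdiffC (A _)); lra.
Qed.

Lemma final_bound k L T S : (0 < k)%N -> is_mixing mul mu Gam T -> is_mixing mul mu Gam S ->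
  Good k L T -> Good k L S ->
  (dist_m mu Gam A I K T S <= (24 * dl k + 28 * w k)%:E)%E.
Proof.
move=> k0 [hT _] [hS _] GT GS.
have dlk : dl k <= 2^-1.
  rewrite /dl lef_pV2 ?posrE ?ltr0Sn //; first by rewrite ler_nat ltnS.
have dl0 := dl_gt0 k; have wk0 := w_ge0 R k.
have hdd : forall g, (dist_d mu A (T g) (S g) <= 4%:E)%E.
  move=> g; apply: (le_trans (dist_d_bound _ _ (act_aut mu mul T hT g) (act_aut mu mul S hS g) 0 0 _ _)).
  - by [].
  - by [].
  - by rewrite /Geo.w expr0 lee_fin; lra.
have hdc : forall g, covered L g -> (dist_d mu A (T g) (S g) <= (8 * dl k + 4 * w k)%:E)%E.
  move=> g cg.
  apply: (le_trans (dist_d_bound _ _ (act_aut mu mul T hT g) (act_aut mu mul S hS g) k (4 * dl k) _ _)).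
  - lra.
  - by move=> l lk; have [h1 h2] := covered_close _ _ _ _ _ hT hS GT GS cg _ lk; lra.
  - by rewrite lee_fin; lra.
have hda : forall g, Gam g -> (dist_a mu A (T g) (S g) <= (8 * dl k + 12 * w k)%:E)%E.
  move=> g Gg.
  have aT := act_aut mu mul T hT g; have aS := act_aut mu mul S hS g.
  apply: (le_trans (dist_a_bound _ _ aT aS k (2 * dl k) _ _ _)).
  - lra.
  - lra.
  - move=> i j ik jk; case: (pselect (covered L g)) => cg.
      have [h1 _] := covered_close _ _ _ _ _ hT hS GT GS cg _ ik.
      apply: (le_trans (mm_I_diff mu (img_meas mu _ aT (mA i)) (img_meas mu _ aS (mA i)) (mA j))).
      lra.
    case: GT => _ _ m1; case: GS => _ _ m2.
    have := m1 g Gg cg i j ik jk; have := m2 g Gg cg i j ik jk.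
    rewrite !ltr_norml ler_norml => /andP[a1 a2] /andP[b1 b2]; apply/andP; split; lra.
  - by rewrite lee_fin; lra.
rewrite /dist_m (_ : (24 * dl k + 28 * w k) = (16 * dl k + 16 * w k) + (8 * dl k + 12 * w k));
  last by ring.
rewrite EFinD; apply: leeD.
  rewrite /dist_dG; apply: (le_trans (geo_esum _ _ _ (8 * dl k + 4 * w k) 4 k _ _ _ _)).
  - lra.
  - by [].
  - move=> i Ii; rewrite EFinM; apply: lee_wpmul2l; first by rewrite lee_fin w_ge0.
    by apply: ge_ereal_sup => _ [g _ <-]; exact: hdd.
  - move=> i Ii ik; rewrite EFinM; apply: lee_wpmul2l; first by rewrite lee_fin w_ge0.
    apply: ge_ereal_sup => _ [g Kg <-]; apply: hdc.
    by case: GT => _ hc _; exact: (hc i Ii ik g Kg).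
  - by rewrite lee_fin; lra.
by apply: ge_ereal_sup => _ [g Gg <-]; exact: hda g Gg.
Qed.

Lemma w_le_dl k : w k <= dl k.
Proof.
have h : w k * k.+1%:R <= 1.
  elim: k => [|k IH]; first by rewrite /Geo.w expr0 mul1r.
  rewrite wS; have := w_ge0 R k => wk0; have := ler0n R k => kk0; have := w_le1 k => wk1.
  rewrite -[k.+1%:R]natr1 in IH; rewrite -[k.+2%:R]natr1 -[k.+1%:R]natr1.
  nra.
by rewrite /dl -div1r ler_pdivlMr ?ltr0Sn.
Qed.

Lemma main_sec : exists D : set (G -> inv_map X),
    [/\ countable D,
        D `<=` is_mixing mul mu Gam &
        forall T, is_mixing mul mu Gam T ->
        forall eps : R, 0 < eps ->
        exists2 S, D S & (dist_m mu Gam A I K T S < eps%:E)%E ].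
Proof.
pose f := fun p : nat * seq J => pick p.1 p.2.
pose D := [set S | is_mixing mul mu Gam S /\ exists p, S = f p].
exists D; split.
- have sub : D `<=` f @` setT by move=> S [_ [p ->]]; exists p.
  apply: (sub_countable (subset_card_le sub)).
  exact: (card_le_trans (card_image_le _ _) (countableP _)).
- by move=> S [].
move=> T mT eps eps0.
pose n := Num.Def.archi_bound (52 / eps).
have hn : 52 / eps < n%:R by apply: archi_boundP; rewrite divr_ge0 // ltW.
pose k := n.+1.
have k0 : (0 < k)%N by [].
have [L GL] := good_exists k T k0 mT.
have [mS GS] := pick_spec k L (ex_intro _ T (conj mT GL)).
exists (pick k L); first by split => //; exists (k, L).
apply: (le_lt_trans (final_bound k L T (pick k L) k0 mT mS GL GS)).
rewrite lte_fin.
have h1 := w_le_dl k; have h2 := dl_gt0 k.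
have : 52 * dl k < eps.
  have hk : (k.+1%:R : R) = n%:R + 2 by rewrite /k -addn2 natrD.
  have hn' : 52 < n%:R * eps by rewrite -ltr_pdivrMr.
  have n0 := ler0n R n.
  rewrite /dl hk ltr_pdivrMr; last by lra.
  nra.
lra.
Qed.

End Main.

End Main.
Import Main.

Theorem mainTheorem5
  (R : realType) (d : measure_display) (X : measurableType d)
  (mu : probability X R)
  (HX : nonatomic_lebesgue_space mu)
  (A : nat -> set X) (mA : forall i, measurable (A i))
  (Agen : forall B : set X, measurable B ->
            exists C, <<s range A >> C /\ mu (symdiff B C) = 0%E)
  (Adense : forall B : set X, measurable B -> forall eps : R, 0 < eps ->
              exists i, (mu (symdiff (A i) B) < eps%:E)%E)
  (G : topologicalType) (mul : G -> G -> G) (inv : G -> G) (e : G)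
  (HG : lc_group mul inv e)
  (I : set nat) (K : nat -> set G)
  (HK : forall i, I i -> compact (K i) /\ interior (K i) !=set0)
  (HKgen : generates mul inv e (\bigcup_(i in I) K i))
  (Gam : set G) (HGam : forall C : set G, compact C -> ~ (Gam `<=` C)) :
  exists D : set (G -> inv_map X),
    [/\ countable D,
        D `<=` is_mixing mul mu Gam &
        forall T, is_mixing mul mu Gam T ->
        forall eps : R, 0 < eps ->
        exists2 S, D S & (dist_m mu Gam A I K T S < eps%:E)%E ].

Proof.
have [U [_ [_ [B [oB HB]]]]] := basis_exists mul inv e HG I K HK HKgen.
exact: (main_sec R d X mu A mA Adense G mul I K HK Gam B oB HB).
Qed.
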